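(* Let $\mathfrak F=\langle U,B\rangle$ be a 3-frame and $\mathrm{Cm}^{ps}(\mathfrak F)=\langle 2^U,\langle B\rangle,[\![B]\!]\rangle$ its full complex algebra. If $\mathfrak F$ is a betweenness frame (resp. weak betweenness frame, strong betweenness frame), then $\mathrm{Cm}^{ps}(\mathfrak F)$ is a betweenness algebra (resp. weak betweenness algebra, strong betweenness algebra).
   Context: A 3-frame is $\langle U,B\rangle$ with $U\neq\emptyset$, $B\subseteq U^3$. Axioms (for all $a,b,c\in U$): (BT0) $B(a,a,a)$; (BT1) $B(a,b,c)\Rightarrow B(c,b,a)$; (BT2) $B(a,b,c)\Rightarrow B(a,a,b)$; (BT3) $B(a,b,c)\wedge B(a,c,b)\Rightarrow b=c$; (BTW) $B(a,b,a)\Rightarrow a=b$; (BT2s) $B(a,a,b)$. A betweenness frame satisfies (BT0)–(BT3); a weak betweenness frame satisfies (BT0),(BT1),(BT2),(BTW); a strong betweenness frame satisfies (BT0),(BT1),(BT2s),(BT3). Operators on $2^U$: $\langle B\rangle(X,Y)=\{u\mid\exists x\in X\,\exists y\in Y\,B(x,u,y)\}$, $[\![B]\!](X,Y)=\{u\mid\forall x\in X\,\forall y\in Y\,B(x,u,y)\}$. A PS-algebra is $\langle A,f,g\rangle$, $A$ a Boolean algebra with at least two elements, $f,g\colon A^2\to A$, $f$ normal ($f(x,y)=0$ if $x=0$ or $y=0$) and additive in each argument, $g$ co-normal ($g(x,y)=1$ if $x=0$ or $y=0$) and co-additive in each argument ($g(x+x',y)=g(x,y)g(x',y)$, $g(x,y+y')=g(x,y)g(x,y')$).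 Algebraic axioms (for all $x,y,z$): (ABT0) $x\leq f(x,x)$; (ABT1$_f$) $f(x,y)\leq f(y,x)$; (ABT1$_g$) $g(x,y)\leq g(y,x)$; (ABT2) $y\cdot f(x,z)\leq f(x\cdot f(x,y),z)$; (ABT3) $f(x,g(x,-y)\cdot y)\leq y$; (wMIA) $x\neq0,y\neq0\Rightarrow g(x,y)\leq f(x,y)$; (ABTW) $a\neq0\Rightarrow g(a,a)\leq a$; (ABT2$^{\mathrm s}$) $b\neq0\Rightarrow a\leq f(a,b)$. A betweenness algebra satisfies (ABT0),(ABT1$_f$),(ABT1$_g$),(ABT2),(ABT3),(wMIA); a weak betweenness algebra satisfies (ABT0),(ABT1$_f$),(ABT1$_g$),(ABT2),(ABTW); a strong betweenness algebra satisfies (ABT1$_f$),(ABT1$_g$),(ABT3),(wMIA),(ABT2$^{\mathrm s}$). *)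

(* Defs.v *)
(* Boolean algebras are rendered as MathComp's complemented distributive
   lattices with top and bottom (ctbDistrLatticeType); the powerset 2^U is
   [set U] (classical_sets), which carries such a canonical structure with
   meet = `&`, join = `|`, complement = ~`, bottom = set0, top = setT. *)
From HB Require Import structures.
From mathcomp Require Import all_boot all_order.
From mathcomp Require Import boolp classical_sets.
Set Implicit Arguments. Unset Strict Implicit. Unset Printing Implicit Defensive.
Import Order.TTheory.
Local Open Scope order_scope.

Section Frames.
Variable U : Type.
Variable B : U -> U -> U -> Prop.

Definition BT0 := forall a, B a a a.
Definition BT1 := forall a b c, B a b c -> B c b a.
Definition BT2 := forall a b c, B a b c -> B a a b.
Definition BT3 := forall a b c, B a b c -> B a c b -> b = c.
Definition BTW := forall a b, B a b a -> a = b.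
Definition BT2s := forall a b, B a a b.

Definition betweenness_frame := [/\ BT0, BT1, BT2 & BT3].
Definition weak_betweenness_frame := [/\ BT0, BT1, BT2 & BTW].
Definition strong_betweenness_frame := [/\ BT0, BT1, BT2s & BT3].

Definition Bdia (X Y : set U) : set U :=
  [set u | exists x, exists y, X x /\ Y y /\ B x u y].
Definition Bbox (X Y : set U) : set U :=
  [set u | forall x y, X x -> Y y -> B x u y].
End Frames.

Section PSAlgebras.
Context {disp : Order.disp_t} {A : ctbDistrLatticeType disp}.
Variables f g : A -> A -> A.

(* notation:  0 = \bot, 1 = \top, x + y = x `|` y, x . y = x `&` y, -x = ~` x *)
Definition PS_algebra : Prop :=
  (\bot : A) != \top /\
  (forall x y, (x == \bot) || (y == \bot) -> f x y = \bot) /\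
  (forall x x' y, f (x `|` x') y = f x y `|` f x' y) /\
  (forall x y y', f x (y `|` y') = f x y `|` f x y') /\
  (forall x y, (x == \bot) || (y == \bot) -> g x y = \top) /\
  (forall x x' y, g (x `|` x') y = g x y `&` g x' y) /\
  (forall x y y', g x (y `|` y') = g x y `&` g x y').

Definition ABT0 := forall x, x <= f x x.
Definition ABT1f := forall x y, f x y <= f y x.
Definition ABT1g := forall x y, g x y <= g y x.
Definition ABT2 := forall x y z, y `&` f x z <= f (x `&` f x y) z.
Definition ABT3 := forall x y, f x (g x (~` y) `&` y) <= y.
Definition wMIA := forall x y, x != \bot -> y != \bot -> g x y <= f x y.
Definition ABTW := forall a, a != \bot -> g a a <= a.
Definition ABT2s := forall a b, b != \bot -> a <= f a b.

Definition betweenness_algebra : Prop :=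
  PS_algebra /\ ABT0 /\ ABT1f /\ ABT1g /\ ABT2 /\ ABT3 /\ wMIA.
Definition weak_betweenness_algebra : Prop :=
  PS_algebra /\ [/\ ABT0, ABT1f, ABT1g, ABT2 & ABTW].
Definition strong_betweenness_algebra : Prop :=
  PS_algebra /\ [/\ ABT1f, ABT1g, ABT3, wMIA & ABT2s].
End PSAlgebras.

(* Main.v *)
Require Import Defs.
From mathcomp Require Import all_boot all_order.
From mathcomp Require Import boolp classical_sets.
Import Order.TTheory.
Local Open Scope classical_set_scope.

Section H.
Variable U : Type.
Variable B : U -> U -> U -> Prop.
Hypothesis U0 : inhabited U.

Lemma nz (X : set U) : X != \bot%O -> exists x, X x.
Proof. by move=> /set0P [x Hx]; exists x. Qed.

Lemma PSok : PS_algebra (Bdia B) (Bbox B).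
Proof.
split.
  apply/negP => /eqP H; case: U0 => u.
  have : (\top%O : set U) u by [].
  by rewrite -H.
split.
  move=> x y /orP [] /eqP -> /=; apply/seteqP; split => u //=;
    by move=> [a [b [? [? ?]]]].
split.
  move=> x x' y; apply/seteqP; split => u /=.
    by move=> [a [b [[?|?] [? ?]]]]; [left|right]; exists a, b.
  by move=> [] [a [b [? [? ?]]]]; exists a, b; split=> //; [left|right].
split.
  move=> x y y'; apply/seteqP; split => u /=.
    by move=> [a [b [? [[?|?] ?]]]]; [left|right]; exists a, b.
  by move=> [] [a [b [? [? ?]]]]; exists a, b; split=> //; split=> //; [left|right].
split.
  move=> x y /orP [] /eqP -> /=; apply/seteqP; split => u //= _ a b //.
split.
  move=> x x' y; apply/seteqP; split => u /=.
    by move=> H; split => a b ? ?; apply: H => //; [left|right].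
  by move=> [H1 H2] a b [?|?] ?; [apply: H1|apply: H2].
move=> x y y'; apply/seteqP; split => u /=.
  by move=> H; split => a b ? ?; apply: H => //; [left|right].
by move=> [H1 H2] a b ? [?|?]; [apply: H1|apply: H2].
Qed.

Lemma ABT1f_ok : BT1 B -> ABT1f (Bdia B).
Proof.
move=> h x y; apply/subsetPset => u [a [b [? [? ?]]]]; exists b, a; split=> //; split=> //.
exact: h.
Qed.

Lemma ABT1g_ok : BT1 B -> ABT1g (Bbox B).
Proof. by move=> h x y; apply/subsetPset => u H a b ? ?; apply: h; apply: H. Qed.

Lemma wMIA_ok : wMIA (Bdia B) (Bbox B).
Proof.
move=> x y /nz [a Ha] /nz [b Hb]; apply/subsetPset => u H.
by exists a, b; split=> //; split=> //; apply: H.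
Qed.

Lemma ABT0_ok : BT0 B -> ABT0 (Bdia B).
Proof. by move=> h x; apply/subsetPset => u Hu; exists u, u. Qed.

Lemma ABT2_ok : BT2 B -> ABT2 (Bdia B).
Proof.
move=> h x y z; apply/subsetPset => u [Hy [a [c [Ha [Hc Hb]]]]].
exists a, c; split; last by split.
split=> //; exists a, u; split=> //; split=> //; exact: h Hb.
Qed.

Lemma ABT3_ok : BT3 B -> ABT3 (Bdia B) (Bbox B).
Proof.
move=> h x y; apply/subsetPset => u [a [c [Ha [[Hg Hc] Hb]]]].
apply: contrapT => Hu.
have Hac : B a c u by apply: Hg.
by have E := h _ _ _ Hb Hac; apply: Hu; rewrite E.
Qed.

Lemma ABTW_ok : BTW B -> ABTW (Bbox B).
Proof.
move=> h a /nz [x Hx]; apply/subsetPset => u H.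
by rewrite -(h _ _ (H _ _ Hx Hx)).
Qed.

Lemma ABT2s_ok : BT2s B -> ABT2s (Bdia B).
Proof.
move=> h a b /nz [y Hy]; apply/subsetPset => u Hu.
by exists u, y; split=> //; split=> //.
Qed.
End H.

Theorem theorem28 (U : Type) (B : U -> U -> U -> Prop) (U_nonempty : inhabited U) :
  (betweenness_frame B -> betweenness_algebra (Bdia B) (Bbox B)) /\
  (weak_betweenness_frame B -> weak_betweenness_algebra (Bdia B) (Bbox B)) /\
  (strong_betweenness_frame B -> strong_betweenness_algebra (Bdia B) (Bbox B)).
Proof.
split; [|split].
- case=> h0 h1 h2 h3; split; first exact: PSok.
  split; first exact: ABT0_ok. split; first exact: ABT1f_ok.
  split; first exact: ABT1g_ok. split; first exact: ABT2_ok.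
  split; first exact: ABT3_ok. exact: wMIA_ok.
- case=> h0 h1 h2 hw; split; first exact: PSok.
  split; [exact: ABT0_ok|exact: ABT1f_ok|exact: ABT1g_ok|exact: ABT2_ok|exact: ABTW_ok].
- case=> h0 h1 h2 h3; split; first exact: PSok.
  split; [exact: ABT1f_ok|exact: ABT1g_ok|exact: ABT3_ok|exact: wMIA_ok|exact: ABT2s_ok].
Qed.
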